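(* Let $0<p\leq1$, let $G=(V,E)$ be any graph with $V=\{1,\dots,n\}$, and let $M=M(G)$. Then $\lambda_1(M)\geq\vartheta_2(G)$.
   Context: $M(G)=(m_{ij})$ is the $n\times n$ matrix with $m_{ii}=1$, and for $i\neq j$: $m_{ij}=1$ if $\{i,j\}\notin E$ and $m_{ij}=(p-1)/p$ if $\{i,j\}\in E$; $\lambda_1(M)$ is its largest eigenvalue. For a graph $H$ and real $k>1$, a rigid vector $k$-coloring of $H$ is a tuple of unit vectors $(u_1,\dots,u_n)$ in $\mathbb R^n$ with $\langle u_i,u_j\rangle=-1/(k-1)$ for all edges $\{i,j\}$ of $H$ and $\langle u_i,u_j\rangle\geq-1/(k-1)$ for all non-adjacent $i\neq j$; $\bar\vartheta_2(H)$ is the infimum of such $k$, and $\vartheta_2(G)=\bar\vartheta_2(\bar G)$ with $\bar G$ the complement of $G$. *)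

(* Defs.v *)
From HB Require Import structures.
From mathcomp Require Import all_boot all_order all_algebra.
From mathcomp Require Import boolp classical_sets reals.
Set Implicit Arguments. Unset Strict Implicit. Unset Printing Implicit Defensive.
Import Order.TTheory GRing.Theory Num.Theory.
Local Open Scope ring_scope.
Local Open Scope classical_set_scope.

(* A simple graph on vertex set 'I_n = {0,...,n-1} (standing for {1,...,n})
   is a symmetric irreflexive relation E; E i j means {i,j} is an edge. *)

Definition Mmat {R : realType} (n : nat) (E : rel 'I_n) (p : R) : 'M[R]_n :=
  \matrix_(i, j) (if i == j then 1 else if E i j then (p - 1) / p else 1).

Definition is_lambda1 {R : realType} (n : nat) (A : 'M[R]_n) (l : R) : Prop :=
  eigenvalue A l /\ (forall a, eigenvalue A a -> a <= l).

Definition dotv {R : realType} (n : nat) (u v : 'rV[R]_n) : R :=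
  \sum_(k < n) u 0 k * v 0 k.

Definition complG (n : nat) (E : rel 'I_n) : rel 'I_n :=
  fun i j => (i != j) && ~~ E i j.

Definition rigid_vector_coloring {R : realType} (n : nat) (H : rel 'I_n) (k : R)
    (u : 'I_n -> 'rV[R]_n) : Prop :=
  (forall i, dotv (u i) (u i) = 1) /\
  (forall i j, i != j -> H i j -> dotv (u i) (u j) = - (k - 1)^-1) /\
  (forall i j, i != j -> ~~ H i j -> dotv (u i) (u j) >= - (k - 1)^-1).

Definition theta2bar {R : realType} (n : nat) (H : rel 'I_n) : R :=
  inf [set k : R | 1 < k /\ exists u, rigid_vector_coloring H k u].

Definition theta2 {R : realType} (n : nat) (E : rel 'I_n) : R :=
  theta2bar (complG E).

(* Main.v *)
Require Import Defs.
From HB Require Import structures.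
From mathcomp Require Import all_boot all_order all_algebra.
From mathcomp Require Import boolp classical_sets reals.
From mathcomp Require Import ring lra.
From mathcomp Require Import complex.
Import Order.TTheory GRing.Theory Num.Theory.
Local Open Scope ring_scope.
Local Open Scope classical_set_scope.

Section Aux.
Local Open Scope sesquilinear_scope.
Variable R : realType.
Let toC := real_complex R.
Lemma conj_toC (r:R) : (toC r)^* = toC r.
Proof. apply: conj_Creal. by apply/complex_realP; exists r. Qed.

Lemma psd_lambda n (M : 'M[R]_n) (l : R) : M^T = M ->
  (forall a, eigenvalue M a -> a <= l) ->
  forall x : 'rV[R]_n, 0 <= (x *m (l%:M - M) *m x^T) 0 0.
Proof.
move=> Msym Hl x.
pose A := map_mx toC M.
have Aherm : A \is hermsymmx.
  rewrite is_hermitianmxE expr0 scale1r; apply/eqP/matrixP => i j.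
  have := congr1 (fun X : 'M_n => X j i) Msym; rewrite !mxE => <-.
  by rewrite conj_toC.
have /orthomx_spectralP AE := hermitian_normalmx Aherm.
set P := spectralmx A in AE; set d := spectral_diag A in AE.
have Pu : P \is unitarymx := spectral_unitarymx A.
have Punit : P \in unitmx := spectral_unit A.
have PiP : invmx P = P^t* := invmx_unitary Pu.
have dreal : forall j, d 0 j \is Num.real.
  by move=> j; have /mxOverP := hermitian_spectral_diag_real Aherm; apply.
have PA : P *m A = diag_mx d *m P.
  by rewrite {1}AE !mulmxA mulmxV // mul1mx.
have dle : forall j, d 0 j = toC (complex.Re (d 0 j)) /\ complex.Re (d 0 j) <= l.
  move=> j; have dE : d 0 j = toC (complex.Re (d 0 j)) by rewrite /toC RRe_real.
  split => //; apply: Hl.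
  rewrite eigenvalue_root_char -(fmorph_root toC) map_char_poly -/A.
  rewrite [X in root _ X](_ : _ = d 0 j); last exact: (esym dE).
  rewrite -eigenvalue_root_char; apply/eigenvalueP; exists (row j P).
    by rewrite -row_mul PA mul_diag_mx; apply/rowP => k; rewrite !mxE.
  apply/negP => /eqP Pj0.
  have := unitarymxP Pu; move/(congr1 (fun X : 'M_n => X j j)).
  rewrite [X in _ = X]mxE eqxx /= mulr1n => Hjj.
  have : (row j (P *m P ^t*)) 0 j = 0 by rewrite row_mul Pj0 mul0mx mxE.
  by rewrite mxE Hjj => /eqP; rewrite oner_eq0.
rewrite -ler0c.
have -> : ((x *m (l%:M - M) *m x^T) 0 0)%:C%C
   = (map_mx toC (x *m (l%:M - M) *m x^T)) 0 0.
  by rewrite [RHS]mxE.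
rewrite !map_mxM map_mxB map_scalar_mx -map_trmx -/A.
set x' := map_mx toC x.
have xc : x'^T = x' ^t*.
  by apply/matrixP => i j; rewrite !mxE conj_toC.
have PtP : P^t* *m P = 1%:M by rewrite -PiP mulVmx.
have lE : (toC l)%:M = P^t* *m (toC l)%:M *m P.
  by rewrite mul_mx_scalar -scalemxAl PtP scalemx1.
rewrite lE AE PiP -mulmxBl -mulmxBr xc.
set e := \row_j (toC l - d 0 j).
have -> : (toC l)%:M - diag_mx d = diag_mx e.
  apply/matrixP => i j; rewrite !mxE; case: eqP => [->|]; rewrite ?mulr1n ?mulr0n //.
  by rewrite subr0.
set y := x' *m P^t*.
have -> : x' *m (P^t* *m diag_mx e *m P) *m x'^t* = y *m diag_mx e *m y^t*.
  by rewrite /y !trmx_mul !map_mxM trmxCK !mulmxA.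
rewrite mul_mx_diag mxE; apply: sumr_ge0 => k _; rewrite !mxE.
rewrite mulrAC; apply: mulr_ge0; first exact: mul_conjC_ge0.
have [dE dl] := dle k.
rewrite dE -rmorphB /toC ler0c subr_ge0 //.
Qed.
Lemma tr11 (Z : 'M[R]_1) : Z^T = Z.
Proof. by rewrite [Z]mx11_scalar tr_scalar_mx. Qed.

Lemma dot_sym m (y z : 'rV[R]_m) : (y *m z^T) 0 0 = (z *m y^T) 0 0.
Proof. by rewrite -[y *m z^T]tr11 trmx_mul trmxK. Qed.

Lemma dot_symM m (y z : 'rV[R]_m) : y *m z^T = z *m y^T.
Proof. by rewrite -[LHS]tr11 trmx_mul trmxK. Qed.

Lemma qform_block n (a : 'M[R]_1) (b : 'M[R]_(1,n)) (D : 'M[R]_n) (t : R)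
  (y : 'rV[R]_n) :
 ((row_mx (t%:M : 'M_1) y) *m block_mx a b b^T D *m (row_mx (t%:M : 'M_1) y)^T) 0 0
 = t * t * a 0 0 + 2 * t * (b *m y^T) 0 0 + (y *m D *m y^T) 0 0.
Proof.
rewrite mul_row_block tr_row_mx mul_row_col !mulmxDl tr_scalar_mx.
rewrite !mul_scalar_mx !mul_mx_scalar -!scalemxAl (@dot_symM _ y b) !mxE.
ring.
Qed.

Lemma mul11 (Z1 Z2 : 'M[R]_1) : (Z1 *m Z2) 0 0 = Z1 0 0 * Z2 0 0.
Proof. by rewrite mxE big_ord1. Qed.

Lemma gram_psd n (B : 'M[R]_n) : B^T = B ->
  (forall x : 'rV[R]_n, 0 <= (x *m B *m x^T) 0 0) ->
  exists U : 'M[R]_n, B = U *m U^T.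
Proof.
elim: n B => [|n IH] B Bsym Bpsd.
  by exists 0; apply/matrixP => [[]].
move: B Bsym Bpsd; rewrite -[n.+1]/(1 + n)%N => B Bsym Bpsd.
set a := ulsubmx B; set b := ursubmx B; set D := drsubmx B.
have cE : dlsubmx B = b^T by rewrite /b trmx_ursub Bsym.
have DE : D^T = D by rewrite /D trmx_drsub Bsym.
have BE : B = block_mx a b b^T D by rewrite -cE submxK.
clearbody a b D.
have Q : forall (t : R) (y : 'rV[R]_n), 0 <= t * t * a 0 0 + 2 * t * (b *m y^T) 0 0 + (y *m D *m y^T) 0 0.
  by move=> t y; have := Bpsd (row_mx t%:M y); rewrite BE qform_block.
set al := a 0 0 in Q.
have aE : a = al%:M := mx11_scalar a.
have al0 : 0 <= al.
  have := Q 1 0; rewrite trmx0 !mulmx0 ?mul0mx !mxE; lra.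
have b0 : al = 0 -> b = 0.
  move=> a0; set be := (b *m b^T) 0 0; set ga := (b *m D *m b^T) 0 0.
  have be0 : 0 <= be.
    by rewrite /be mxE; apply: sumr_ge0 => j _; rewrite mxE -expr2 sqr_ge0.
  have be00 : be = 0.
    apply/eqP; rewrite eq_le be0 andbT; rewrite leNgt; apply/negP => bp.
    have := Q (-(ga+1)/(2*be)) b; rewrite -/be -/ga a0.
    have -> : 2 * (- (ga + 1) / (2 * be)) * be = -(ga+1).
      by field; rewrite gt_eqF.
    lra.
  apply/rowP => j; rewrite mxE.
  have : \sum_(k < n) b 0 k * b 0 k = 0.
    apply: (etrans _ be00).
    by rewrite /be mxE; apply: eq_bigr => k _; rewrite mxE.
  move/eqP; rewrite psumr_eq0; last by move=> k _; rewrite -expr2 sqr_ge0.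
  by move/allP/(_ j (mem_index_enum _)); rewrite /= mulf_eq0 orbb => /eqP.
set S := D - al^-1 *: (b^T *m b).
have Spsd : forall y : 'rV_n, 0 <= (y *m S *m y^T) 0 0.
  move=> y; rewrite /S mulmxBr mulmxBl -scalemxAr -scalemxAl.
  rewrite !mulmxA -(mulmxA y) (@dot_symM _ y b) -(mulmxA (b *m y^T)) mulmxA.
  rewrite [X in 0 <= X]mxE [X in _ + X]mxE [X in _ - X]mxE mul11.
  set be := (b *m y^T) 0 0; set ga := (y *m D *m y^T) 0 0.
  have [->|ap] := eqVneq al 0.
    have := Q 0 y; rewrite -/ga invr0; lra.
  have := Q (- be / al) y; rewrite -/be -/ga.
  have -> : - be / al * (- be / al) * al + 2 * (- be / al) * be + ga
            = ga - al^-1 * (be * be) by field.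
  by [].
have Ssym : S^T = S.
  by rewrite /S linearB /= linearZ /= trmx_mul trmxK DE.
have [V SV] := IH _ Ssym Spsd.
set s := Num.sqrt al.
have ss : s * s = al by rewrite -expr2 sqr_sqrtr.
exists (block_mx s%:M 0 (s^-1 *: b^T) V).
rewrite tr_block_mx mulmx_block {1}BE !tr_scalar_mx !trmx0 !mulmx0 !addr0.
rewrite !linearZ /= trmxK.
have sb : s * s^-1 *: b = b.
  have [a0|ap] := eqVneq al 0; first by rewrite (b0 a0) scaler0.
  rewrite mulfV ?scale1r // /s sqrtr_eq0 -ltNge lt_def ap al0 //.
congr block_mx.
- by rewrite aE -scalar_mxM ss.
- by rewrite mul0mx addr0 mul_scalar_mx scalerA mulrC sb.
- rewrite mul_mx_scalar scalerA.
  by rewrite -[in LHS]sb linearZ.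
- rewrite -scalemxAl scalerA -invfM ss -SV /S.
  by rewrite addrC subrK.
Qed.
End Aux.

Lemma quad_entry (R : realType) n (A : 'M[R]_n) i :
  ((delta_mx 0 i : 'rV[R]_n) *m A *m (delta_mx 0 i : 'rV[R]_n)^T) 0 0 = A i i.
Proof. by rewrite trmx_delta -rowE -colE !mxE. Qed.

Lemma gram_entry (R : realType) n (U : 'M[R]_n) i j :
  dotv (row i U) (row j U) = (U *m U^T) i j.
Proof. by rewrite /dotv mxE; apply: eq_bigr => k _; rewrite !mxE. Qed.

Theorem lemma10 (R : realType) (p : R) (n : nat) (E : rel 'I_n)
    (Esym : symmetric E) (Eirr : irreflexive E)
    (hp0 : 0 < p) (hp1 : p <= 1) (l : R) :
  is_lambda1 (Mmat E p) l -> theta2 E <= l.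
Proof.
move=> [Hev Hmax].
set M := Mmat E p.
have Msym : M^T = M.
  apply/matrixP => i j; rewrite !mxE eq_sym Esym //.
have psd := @psd_lambda R n M l Msym Hmax.
have [i0 _ | none] := pickP (fun _ : 'I_n => true); last first.
  have /eigenvalueP [v _ vnz] := Hev; exfalso; move/negP: vnz; apply.
  by apply/eqP/rowP => i; have := none i.
have l1 : 1 <= l.
  have := psd (delta_mx 0 i0 : 'rV[R]_n); rewrite quad_entry !mxE eqxx /= mulr1n.
  by rewrite subr_ge0.
have mem : forall k, 1 < k -> l <= k ->
    [set k : R | 1 < k /\ exists u, rigid_vector_coloring (complG E) k u] k.
  move=> k k1 lk; split => //.
  pose Bk := (k - 1)^-1 *: (k%:M - M).
  have Bsym : Bk^T = Bk by rewrite /Bk linearZ /= linearB /= tr_scalar_mx Msym.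
  have Bpsd : forall x : 'rV_n, 0 <= (x *m Bk *m x^T) 0 0.
    move=> x; rewrite /Bk -scalemxAr -scalemxAl mxE; apply: mulr_ge0.
      by rewrite invr_ge0 subr_ge0 ltW.
    have -> : k%:M - M = (l%:M - M) + (k - l)%:M :> 'M_n.
      by rewrite raddfB /= [RHS]addrC addrA subrK.
    rewrite mulmxDr mulmxDl mxE; apply: addr_ge0; first exact: psd.
    rewrite mul_mx_scalar -scalemxAl mxE; apply: mulr_ge0; first by rewrite subr_ge0.
    by rewrite mxE; apply: sumr_ge0 => j _; rewrite mxE -expr2 sqr_ge0.
  have [U BU] := @gram_psd R n Bk Bsym Bpsd.
  have k10 : k - 1 != 0 by rewrite subr_eq0 gt_eqF.
  exists (fun i => row i U).
  have Be : forall i j, dotv (row i U) (row j U) = (k - 1)^-1 * ((i == j)%:R * k - M i j).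
    move=> i j; rewrite gram_entry -BU !mxE; congr (_ * _).
    by rewrite mulr_natl.
  split; [|split].
  - move=> i; rewrite Be eqxx /M mxE eqxx mul1r mulVf //.
  - move=> i j ij /andP [_ nE]; rewrite Be (negbTE ij) /M mxE (negbTE ij) (negbTE nE).
    by rewrite mul0r sub0r mulrN mulr1.
  - move=> i j ij; rewrite /complG ij /= negbK => Eij.
    rewrite Be (negbTE ij) /M mxE (negbTE ij) Eij mul0r sub0r.
    have kp : 0 < (k - 1)^-1 by rewrite invr_gt0 subr_gt0.
    have : 0 <= - ((p - 1) / p).
      by rewrite -mulNr opprB; apply: divr_ge0; [rewrite subr_ge0 | exact: ltW].
    move=> h; apply: (@le_trans _ _ 0); first by rewrite oppr_le0 ltW.
    exact: mulr_ge0 (ltW kp) h.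
have lb : has_lbound [set k : R | 1 < k /\ exists u, rigid_vector_coloring (complG E) k u].
  by exists 1 => k [k1 _]; exact: ltW.
apply/ler_addgt0Pr => e e0.
apply: (ge_inf lb); apply: mem; lra.
Qed.
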